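(* Under the saturation assumption below, suppose that $\hat{\mathcal I}$ is not a subset of any $\mathcal I\in\mathbb I^*$. Then $C_2=\sum_{\mathcal I\in\mathbb I^*}T_{\mathcal I}-\sum_{\mathcal I\in\overline{\mathbb I}^*}\overline T_{\mathcal I}$ (as a function of $\delta\in(0,\bar\delta]$) can be written as $P(\delta)/D(\delta)$, where $P$ and $D$ are polynomials in $\delta$, $D$ is a finite product of factors of the form $|\alpha_{\mathcal E(\mathcal I)}|-|\alpha_{\mathcal I}|$ ($\mathcal I\in\mathbb I$) or $|\alpha_{\overline{\mathcal E}(\mathcal I)}|-|\alpha_{\mathcal I}|$ ($\mathcal I\in\overline{\mathbb I}$), and $P(0)>0$.
   Context: A matching model: finite connected simple graph $\mathcal G=(\mathcal V,\xi)$, $\mathcal V=\{1,\dots,n\}$, arrival distribution $\alpha$ on $\mathcal V$; FCFS policy (an arriving item of class $i$ is matched with the oldest present item whose class is a neighbour of $i$, otherwise it waits). $\mathcal E(i)$ is the neighbour set of $i$ in $\mathcal G$, $\mathcal E(V)=\bigcup_{i\in V}\mathcal E(i)$, $|\alpha_V|=\sum_{i\in V}\alpha_i$. An independent set is a non-empty set of pairwise non-adjacent nodes; $\mathbb I$ is the set of independent sets of $\mathcal G$. Fix distinct non-adjacent nodes $i^*,j^*$; $\overline{\mathcal G}$ is $\mathcal G$ with edge $\{i^*,j^*\}$ added, with neighbourhood map $\overline{\mathcal E}$ and set of independent sets $\overline{\mathbb I}$. $\mathbb I^*=\{\mathcal I\in\mathbb I: i^*\in\mathcal I\text{ or }j^*\in\mathcal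 I\}$, $\mathbb I^{-*}=\mathbb I\setminus\mathbb I^*$, $\overline{\mathbb I}^*=\{\mathcal I\in\overline{\mathbb I}: i^*\in\mathcal I\text{ or }j^*\in\mathcal I\}$. For $\mathcal I\in\mathbb I$ and an ordering $(i_1,\dots,i_m)$ of $\mathcal I$, with $\mathcal I_k=\{i_1,\dots,i_k\}$, set $T_{(i_1,\dots,i_m)}=\prod_{k=1}^m\frac{\alpha_{i_k}}{|\alpha_{\mathcal E(\mathcal I_k)}|-|\alpha_{\mathcal I_k}|}$; $T_{\mathcal I}$ is the sum over all orderings of $\mathcal I$. $\overline T_{\mathcal I}$ ($\mathcal I\in\overline{\mathbb I}$) is defined identically with $\mathcal E$ replaced by $\overline{\mathcal E}$. Saturation assumption: $\alpha_i=a_i+b_i\delta$ with constants $a_i>0$, $b_i\in\mathbb R$, such that for all $\delta\in(0,\bar\delta]$ (some $\bar\delta>0$) $\alpha$ is a probability distribution satisfying the stability condition $|\alpha_{\mathcal I}|<|\alpha_{\mathcal E(\mathcal I)}|$ for all $\mathcal I\in\mathbb I$; moreover $\sum_{i\in\mathcal E(\hat{\mathcal I})}a_i-\sum_{i\in\hat{\mathcal I}}a_i=0$ for exactly one independent set $\hat{\mathcal I}\in\mathbb I$ (called saturated). *)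

(* Defs.v *)
From HB Require Import structures.
From mathcomp Require Import all_boot all_order all_algebra.
From mathcomp Require Import reals.
Set Implicit Arguments. Unset Strict Implicit. Unset Printing Implicit Defensive.
Import Order.TTheory GRing.Theory Num.Theory.
Local Open Scope ring_scope.

Section MatchingDefs.
Variable n : nat.
Notation V := 'I_n.

Definition simple_graph (e : rel V) := symmetric e /\ irreflexive e.
Definition connected_graph (e : rel V) := forall x y : V, connect e x y.

Definition nbhd (e : rel V) (A : {set V}) : {set V} :=
  [set j | [exists i in A, e i j]].

Definition indep (e : rel V) (A : {set V}) : bool :=
  (A != set0) && [forall i in A, forall j in A, ~~ e i j].

Definition add_edge (e : rel V) (ist jst : V) : rel V :=
  fun x y => [|| e x y, (x == ist) && (y == jst) | (x == jst) && (y == ist)].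

Variable R : realType.

Definition amass (alpha : V -> R) (A : {set V}) : R := \sum_(i in A) alpha i.

Definition T_ord (e : rel V) (alpha : V -> R) (s : seq V) : R :=
  \prod_(k < size s)
    (alpha (tnth (in_tuple s) k) /
     (amass alpha (nbhd e [set x in take k.+1 s])
      - amass alpha [set x in take k.+1 s])).

Definition T_set (e : rel V) (alpha : V -> R) (A : {set V}) : R :=
  \sum_(s <- permutations (enum A)) T_ord e alpha s.

Definition alpha_of (a b : V -> R) (delta : R) : V -> R :=
  fun i => a i + b i * delta.

Definition Tstar_sum (e : rel V) (ist jst : V) (alpha : V -> R) : R :=
  \sum_(A : {set V} | indep e A && ((ist \in A) || (jst \in A))) T_set e alpha A.

Definition C2 (e : rel V) (ist jst : V) (a b : V -> R) (delta : R) : R :=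
  Tstar_sum e ist jst (alpha_of a b delta)
  - Tstar_sum (add_edge e ist jst) ist jst (alpha_of a b delta).

Definition saturation (e : rel V) (a b : V -> R) (dbar : R) (Ihat : {set V}) :=
  [/\ forall i, 0 < a i,
      0 < dbar,
      forall delta, 0 < delta <= dbar ->
        [/\ (forall i, 0 <= alpha_of a b delta i),
            \sum_i alpha_of a b delta i = 1 &
            forall A, indep e A ->
              amass (alpha_of a b delta) A < amass (alpha_of a b delta) (nbhd e A)],
      indep e Ihat /\ amass a (nbhd e Ihat) - amass a Ihat = 0 &
      forall A, indep e A -> amass a (nbhd e A) - amass a A = 0 -> A = Ihat].

Definition alphaP (a b : V -> R) (i : V) : {poly R} := (a i)%:P + b i *: 'X.
Definition gapP (e : rel V) (a b : V -> R) (A : {set V}) : {poly R} :=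
  \sum_(i in nbhd e A) alphaP a b i - \sum_(i in A) alphaP a b i.

Definition admissible_factor (e : rel V) (ist jst : V) (a b : V -> R) (f : {poly R}) :=
  exists A : {set V},
    (indep e A /\ f = gapP e a b A) \/
    (indep (add_edge e ist jst) A /\ f = gapP (add_edge e ist jst) a b A).

End MatchingDefs.

(* Main.v *)
Require Import Defs.
From HB Require Import structures.
From mathcomp Require Import all_boot all_order all_algebra.
From mathcomp Require Import reals.
From mathcomp Require Import ring lra.
Import Order.TTheory GRing.Theory Num.Theory.
Local Open Scope ring_scope.

Set Implicit Arguments.
Section Rat.
Variables (n : nat) (R : realType) (e : rel 'I_n) (ist jst : 'I_n) (a b : 'I_n -> R) (dbar : R).

Definition ratrep (f : R -> R) := exists (P : {poly R}) (Ds : seq {poly R}),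
  [/\ forall g, g \in Ds -> admissible_factor e ist jst a b g,
      0 < (\prod_(g <- Ds) g).[0], P.[0] = f 0 * (\prod_(g <- Ds) g).[0] &
      forall d, 0 < d <= dbar -> (\prod_(g <- Ds) g).[d] != 0 /\
         f d = P.[d] / (\prod_(g <- Ds) g).[d]].

Lemma ratrep_ext f1 f2 : (forall d, f1 d = f2 d) -> ratrep f1 -> ratrep f2.
Proof.
move=> h [P [Ds [h1 h2 h3 h4]]]; exists P, Ds; split => //; first by rewrite -h.
by move=> d hd; rewrite -h; apply: h4.
Qed.

Lemma ratrep_poly (q : {poly R}) : ratrep (fun d => q.[d]).
Proof.
exists q, [::]; split => //; rewrite ?big_nil ?hornerC ?mulr1 ?ltr01 //.
by move=> d _; rewrite hornerC divr1 oner_neq0.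
Qed.

Lemma ratrep_add f1 f2 : ratrep f1 -> ratrep f2 -> ratrep (fun d => f1 d + f2 d).
Proof.
move=> [P1 [D1 [ad1 p1 z1 h1]]] [P2 [D2 [ad2 p2 z2 h2]]].
exists (P1 * \prod_(g <- D2) g + P2 * \prod_(g <- D1) g), (D1 ++ D2); split.
- by move=> g; rewrite mem_cat => /orP[] ?; [apply: ad1|apply: ad2].
- by rewrite big_cat hornerM mulr_gt0.
- rewrite big_cat hornerD !hornerM z1 z2 /=; ring.
- move=> d hd; have [n1 e1] := h1 d hd; have [n2 e2] := h2 d hd.
  rewrite big_cat hornerM mulf_neq0 //; split=> //.
  rewrite e1 e2 hornerD !hornerM. by field; rewrite n1 n2.
Qed.

Lemma ratrep_mul f1 f2 : ratrep f1 -> ratrep f2 -> ratrep (fun d => f1 d * f2 d).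
Proof.
move=> [P1 [D1 [ad1 p1 z1 h1]]] [P2 [D2 [ad2 p2 z2 h2]]].
exists (P1 * P2), (D1 ++ D2); split.
- by move=> g; rewrite mem_cat => /orP[] ?; [apply: ad1|apply: ad2].
- by rewrite big_cat hornerM mulr_gt0.
- rewrite big_cat !hornerM z1 z2 /=; ring.
- move=> d hd; have [n1 e1] := h1 d hd; have [n2 e2] := h2 d hd.
  rewrite big_cat hornerM mulf_neq0 //; split=> //.
  rewrite e1 e2 !hornerM. by field; rewrite n1 n2.
Qed.

Lemma ratrep_opp f : ratrep f -> ratrep (fun d => - f d).
Proof.
move=> [P [D [ad p z h]]]; exists (- P), D; split => //.
  by rewrite hornerN z mulNr.
by move=> d hd; have [n1 e1] := h d hd; split => //; rewrite e1 hornerN mulNr.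
Qed.

Lemma ratrep_div f (g : {poly R}) : admissible_factor e ist jst a b g -> 0 < g.[0] ->
  (forall d, 0 < d <= dbar -> g.[d] != 0) ->
  ratrep f -> ratrep (fun d => f d / g.[d]).
Proof.
move=> adg g0 gd [P [D [ad p z h]]]; exists P, (g :: D); split.
- by move=> g'; rewrite inE => /orP[/eqP->|]//; apply: ad.
- by rewrite big_cons hornerM mulr_gt0.
- rewrite big_cons hornerM z; field; by rewrite gt_eqF.
- move=> d hd; have [n1 e1] := h d hd; have := gd d hd => n2.
  rewrite big_cons hornerM mulf_neq0 //; split => //.
  rewrite e1; by field; rewrite n1 n2.
Qed.

Lemma ratrep_sum (I : Type) (r : seq I) (Pr : pred I) (F : I -> R -> R) :
  (forall i, Pr i -> ratrep (F i)) -> ratrep (fun d => \sum_(i <- r | Pr i) F i d).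
Proof.
move=> h; elim: r => [|i r ih].
  by apply: ratrep_ext (ratrep_poly 0) => d; rewrite big_nil hornerC.
case hi: (Pr i).
  apply: ratrep_ext (ratrep_add (h i hi) ih) => d; by rewrite big_cons hi.
by apply: ratrep_ext ih => d; rewrite big_cons hi.
Qed.

Lemma ratrep_prod (I : Type) (r : seq I) (Pr : pred I) (F : I -> R -> R) :
  (forall i, Pr i -> ratrep (F i)) -> ratrep (fun d => \prod_(i <- r | Pr i) F i d).
Proof.
move=> h; elim: r => [|i r ih].
  by apply: ratrep_ext (ratrep_poly 1) => d; rewrite big_nil hornerC.
case hi: (Pr i).
  apply: ratrep_ext (ratrep_mul (h i hi) ih) => d; by rewrite big_cons hi.
by apply: ratrep_ext ih => d; rewrite big_cons hi.
Qed.

End Rat.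

Section Graph.
Variables (n : nat) (R : realType) (e : rel 'I_n) (ist jst : 'I_n) (a b : 'I_n -> R)
  (dbar : R) (Ihat : {set 'I_n}).
Hypothesis sat : saturation e a b dbar Ihat.

Lemma amass_alpha d A : amass (alpha_of a b d) A = amass a A + amass b A * d.
Proof. by rewrite /amass /alpha_of big_split /= mulr_suml. Qed.

Lemma gapP_horner e' A d : (gapP e' a b A).[d] =
  amass (alpha_of a b d) (nbhd e' A) - amass (alpha_of a b d) A.
Proof.
rewrite /gapP hornerD hornerN !horner_sum /amass; congr (_ - _);
by apply: eq_bigr => i _; rewrite /alphaP hornerD hornerC hornerZ hornerX.
Qed.

Lemma alphaP_horner i d : (alphaP a b i).[d] = alpha_of a b d i.
Proof. by rewrite /alphaP hornerD hornerC hornerZ hornerX. Qed.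

Lemma key_lin (g0 g1 : R) : 0 < dbar -> (forall d, 0 < d <= dbar -> 0 < g0 + g1 * d) ->
  0 <= g0.
Proof.
move=> hd H; rewrite leNgt; apply/negP => g0n.
case: (lerP g1 0) => h1.
  have := H dbar; rewrite hd lexx => /(_ isT). nra.
pose t := - g0 / (2 * g1).
have ht : g1 * t = - g0 / 2 by rewrite /t; field; rewrite gt_eqF.
have t0 : 0 < t by rewrite /t divr_gt0 // ?oppr_gt0 // mulr_gt0.
case: (lerP dbar t) => hdt.
  have := H dbar; rewrite hd lexx => /(_ isT).
  have : g1 * dbar <= g1 * t by rewrite ler_pM2l.
  lra.
have := H t; rewrite t0 (ltW hdt) => /(_ isT). lra.
Qed.

Lemma alpha_nonneg d : 0 <= d <= dbar -> forall i, 0 <= alpha_of a b d i.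
Proof.
case: sat => ha _ hst _ _.
case/andP; rewrite le_eqVlt => /orP[/eqP <-|d0] dd i.
  by rewrite /alpha_of mulr0 addr0 ltW.
by have [h _ _] := hst d (ltac:(by rewrite d0 dd)); apply: h.
Qed.

Lemma gap_pos B d : indep e B -> B != Ihat -> 0 <= d <= dbar ->
  0 < amass (alpha_of a b d) (nbhd e B) - amass (alpha_of a b d) B.
Proof.
move=> iB nB.
case: sat => ha hdb hst _ huniq.
case/andP; rewrite le_eqVlt => /orP[/eqP <-|d0] dd; last first.
  have [_ _ h] := hst d (ltac:(by rewrite d0 dd)); by rewrite subr_gt0 h.
rewrite !amass_alpha !mulr0 !addr0.
have g0 : 0 <= amass a (nbhd e B) - amass a B.
  apply: (@key_lin _ (amass b (nbhd e B) - amass b B)) => // d' hd'.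
  have [_ _ h] := hst d' hd'; move: (h B iB); rewrite !amass_alpha => hh.
  lra.
rewrite lt_def g0 andbT; apply/eqP => h0; by move: nB; rewrite (huniq B iB h0) eqxx.
Qed.

Lemma amass_le (al : 'I_n -> R) (A B : {set 'I_n}) : (forall i, 0 <= al i) ->
  A \subset B -> amass al A <= amass al B.
Proof.
move=> h sAB; rewrite /amass (@big_setID _ _ _ _ B A) /= (setIidPr sAB) lerDl.
by apply: sumr_ge0 => i _.
Qed.

Definition good (e' : rel 'I_n) :=
  [/\ forall B, indep e' B -> indep e B,
      forall B, nbhd e B \subset nbhd e' B &
      forall B, indep e' B -> admissible_factor e ist jst a b (gapP e' a b B)].

Lemma good_e : good e.
Proof. by split => // B iB; exists B; left. Qed.

Lemma indep_mono (e1 e2 : rel 'I_n) B : (forall x y, e1 x y -> e2 x y) ->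
  indep e2 B -> indep e1 B.
Proof.
move=> h /andP[ne /forall_inP H]; apply/andP; split => //.
apply/forall_inP => i iB; apply/forall_inP => j jB.
have /forall_inP := H i iB => /(_ j jB); apply: contra; exact: h.
Qed.

Lemma good_bar : good (add_edge e ist jst).
Proof.
split.
- by move=> B; apply: indep_mono => x y h; rewrite /add_edge h.
- move=> B; apply/subsetP => j; rewrite !inE => /exists_inP[i iB hij].
  by apply/exists_inP; exists i => //; rewrite /add_edge hij.
- by move=> B iB; exists B; right.
Qed.

Lemma gap'_pos (e' : rel 'I_n) (B : {set 'I_n}) d : good e' -> indep e' B -> B != Ihat -> 0 <= d <= dbar ->
  0 < amass (alpha_of a b d) (nbhd e' B) - amass (alpha_of a b d) B.
Proof.
move=> [g1 g2 _] iB nB hd.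
have := @gap_pos B d (g1 B iB) nB hd => h0; apply: (lt_le_trans h0); rewrite lerD2r.
by apply: amass_le => //; apply: alpha_nonneg.
Qed.

Lemma indep_sub (e' : rel 'I_n) (A B : {set 'I_n}) : indep e' A -> B \subset A -> B != set0 -> indep e' B.
Proof.
move=> /andP[_ /forall_inP H] sBA nB; apply/andP; split => //.
apply/forall_inP => i iB; apply/forall_inP => j jB.
by have /forall_inP := H i (subsetP sBA i iB) => /(_ j (subsetP sBA j jB)).
Qed.


Lemma prefix_ok (e' : rel 'I_n) (A : {set 'I_n}) (s : seq 'I_n) (k : 'I_(size s)) : indep e' A -> ~~ (Ihat \subset A) ->
  perm_eq s (enum A) ->
  indep e' [set x in take k.+1 s] /\ [set x in take k.+1 s] != Ihat.
Proof.
move=> iA nI ps.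
have sub : [set x in take k.+1 s] \subset A.
  apply/subsetP => x; rewrite inE => /mem_take; by rewrite (perm_mem ps) mem_enum.
split.
  apply: (indep_sub _ iA sub); first apply/set0Pn; exists (tnth (in_tuple s) k).
  rewrite inE (tnth_nth (tnth (in_tuple s) k)) /= -(nth_take _ (ltnSn k)).
  by apply: mem_nth; rewrite size_take; case: ifP => //; rewrite ltn_ord.
by apply/eqP => h; move: nI; rewrite -h sub.
Qed.


Hypothesis hyp : forall A : {set 'I_n}, indep e A -> (ist \in A) || (jst \in A) ->
     ~~ (Ihat \subset A).

Lemma dbar_pos : 0 < dbar.
Proof. by case: sat. Qed.

Lemma ratrep_Tord (e' : rel 'I_n) (A : {set 'I_n}) (s : seq 'I_n) :
  good e' -> indep e' A -> ~~ (Ihat \subset A) -> perm_eq s (enum A) ->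
  @ratrep n R e ist jst a b dbar (fun d => T_ord e' (alpha_of a b d) s).
Proof.
move=> ge iA nI ps; rewrite /T_ord.
apply: (@ratrep_prod n R e ist jst a b dbar _ _ _ (fun k d => alpha_of a b d (tnth (in_tuple s) k) /
   (amass (alpha_of a b d) (nbhd e' [set x in take k.+1 s])
      - amass (alpha_of a b d) [set x in take k.+1 s]))) => k _.
have [iB nB] := prefix_ok _ _ _ k iA nI ps.
apply: (@ratrep_ext n R e ist jst a b dbar (fun d => (alphaP a b (tnth (in_tuple s) k)).[d] /
   (gapP e' a b [set x in take k.+1 s]).[d])).
  by move=> d; rewrite alphaP_horner gapP_horner.
have db := dbar_pos.
apply: ratrep_div.
- by case: ge => _ _ h; apply: h.
- by rewrite gapP_horner; apply: gap'_pos => //; rewrite lexx ltW.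
- move=> d /andP[d0 dd]; rewrite gapP_horner gt_eqF //; apply: gap'_pos => //.
  by rewrite ltW.
- exact: ratrep_poly.
Qed.

Lemma ratrep_Tstar (e' : rel 'I_n) : good e' ->
  @ratrep n R e ist jst a b dbar (fun d => Tstar_sum e' ist jst (alpha_of a b d)).
Proof.
move=> ge; rewrite /Tstar_sum.
apply: (@ratrep_sum n R e ist jst a b dbar _ _ _ (fun A d => T_set e' (alpha_of a b d) A)) => A /andP[iA hij].
have nI : ~~ (Ihat \subset A) by apply: hyp => //; case: ge => h _ _; apply: h.
rewrite /T_set.
apply: (@ratrep_ext n R e ist jst a b dbar (fun d => \sum_(s <- permutations (enum A) | s \in permutations (enum A))
   T_ord e' (alpha_of a b d) s)).
  by move=> d; rewrite big_seq.
apply: (@ratrep_sum n R e ist jst a b dbar _ _ _ (fun s d => T_ord e' (alpha_of a b d) s)) => s.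
rewrite mem_permutations => ps; exact: ratrep_Tord ge iA nI ps.
Qed.

Lemma Tord_pos (e' : rel 'I_n) (A : {set 'I_n}) (s : seq 'I_n) :
  good e' -> indep e' A -> ~~ (Ihat \subset A) -> perm_eq s (enum A) ->
  0 < T_ord e' (alpha_of a b 0) s.
Proof.
move=> ge iA nI ps; rewrite /T_ord; apply: prodr_gt0 => k _.
have [iB nB] := prefix_ok _ _ _ k iA nI ps.
have db := dbar_pos.
apply: divr_gt0; first by rewrite /alpha_of mulr0 addr0; case: sat.
by apply: gap'_pos => //; rewrite lexx ltW.
Qed.

Lemma Tord_le (A : {set 'I_n}) (s : seq 'I_n) :
  indep (add_edge e ist jst) A -> ~~ (Ihat \subset A) -> perm_eq s (enum A) ->
  T_ord (add_edge e ist jst) (alpha_of a b 0) s <= T_ord e (alpha_of a b 0) s.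
Proof.
move=> iA nI ps; rewrite /T_ord; apply: ler_prod => k _.
have [iB nB] := prefix_ok _ _ _ k iA nI ps.
have [g1 g2 _] := good_bar.
have db := dbar_pos.
have h0 : (0:R) <= 0 <= dbar by rewrite lexx ltW.
have hg := gap_pos _ _ (g1 _ iB) nB h0.
have hgb := gap'_pos _ _ good_bar iB nB h0.
have ha : 0 < alpha_of a b 0 (tnth (in_tuple s) k).
  by rewrite /alpha_of mulr0 addr0; case: sat.
apply/andP; split; first by rewrite ltW // divr_gt0.
apply: ler_wpM2l; first exact: ltW.
rewrite lef_pV2 ?posrE // lerD2r; apply: amass_le => //.
exact: alpha_nonneg.
Qed.

Lemma Tset_pos (e' : rel 'I_n) (A : {set 'I_n}) :
  good e' -> indep e' A -> ~~ (Ihat \subset A) -> 0 < T_set e' (alpha_of a b 0) A.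
Proof.
move=> ge iA nI; rewrite /T_set.
have hm : enum A \in permutations (enum A) by rewrite mem_permutations.
rewrite (perm_big _ (perm_to_rem hm)) big_cons; apply: ltr_pwDl.
  exact: Tord_pos ge iA nI (perm_refl _).
rewrite big_seq; apply: sumr_ge0 => s /mem_rem; rewrite mem_permutations => ps.
apply: ltW; exact: Tord_pos ge iA nI ps.
Qed.

Lemma Tset_le (A : {set 'I_n}) :
  indep (add_edge e ist jst) A -> ~~ (Ihat \subset A) ->
  T_set (add_edge e ist jst) (alpha_of a b 0) A <= T_set e (alpha_of a b 0) A.
Proof.
move=> iA nI; rewrite /T_set !big_seq; apply: ler_sum => s.
rewrite mem_permutations => ps; exact: Tord_le iA nI ps.
Qed.


Lemma C2_pos : simple_graph e -> ist != jst -> ~~ e ist jst ->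
  0 < C2 e ist jst a b 0.
Proof.
move=> [sym irr] hneq hne.
have [g1 g2 _] := good_bar.
rewrite /C2 /Tstar_sum subr_gt0.
rewrite [X in _ < X](bigID (fun A => indep (add_edge e ist jst) A)) /=.
set A0 := [set ist; jst].
have h1 : \sum_(A | indep (add_edge e ist jst) A && ((ist \in A) || (jst \in A)))
    T_set (add_edge e ist jst) (alpha_of a b 0) A <=
  \sum_(A | (indep e A && ((ist \in A) || (jst \in A))) && indep (add_edge e ist jst) A)
    T_set e (alpha_of a b 0) A.
  rewrite [X in X <= _](eq_bigl (fun A => (indep e A && ((ist \in A) || (jst \in A)))
       && indep (add_edge e ist jst) A)).
    apply: ler_sum => A /andP[/andP[iA c] iB]; apply: Tset_le => //; exact: hyp.
  move=> A /=; case iB: (indep (add_edge e ist jst) A); rewrite ?andbT ?andbF //=.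
  by rewrite (g1 _ iB).
have iA0 : indep e A0.
  apply/andP; split.
    by apply/set0Pn; exists ist; rewrite !inE eqxx.
  apply/forall_inP => i; rewrite !inE => /orP[]/eqP->; apply/forall_inP => j;
    rewrite !inE => /orP[]/eqP->; rewrite ?irr //.
  by rewrite sym.
have nA0 : ~~ indep (add_edge e ist jst) A0.
  apply/negP => /andP[_ /forall_inP H].
  have := H ist; rewrite !inE eqxx /= => /(_ isT) /forall_inP /(_ jst).
  by rewrite !inE eqxx orbT /add_edge !eqxx /= orbT => /(_ isT).
have h2 : 0 < \sum_(A | (indep e A && ((ist \in A) || (jst \in A))) &&
     ~~ indep (add_edge e ist jst) A) T_set e (alpha_of a b 0) A.
  rewrite (bigD1 A0) /=; last by rewrite iA0 nA0 /A0 !inE eqxx.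
  apply: ltr_pwDl.
    apply: (Tset_pos _ good_e iA0); apply: hyp; [exact: iA0 | by rewrite /A0 !inE eqxx].
  apply: sumr_ge0 => A /andP[/andP[/andP[iA c] _] _].
  apply: ltW; apply: (Tset_pos _ good_e iA); exact: hyp.
lra.
Qed.
End Graph.

Unset Implicit Arguments.

Theorem mainTheorem7 (n : nat) (R : realType) (e : rel 'I_n) (ist jst : 'I_n)
  (a b : 'I_n -> R) (dbar : R) (Ihat : {set 'I_n}) :
  simple_graph e -> connected_graph e ->
  ist != jst -> ~~ e ist jst ->
  saturation e a b dbar Ihat ->
  (forall A : {set 'I_n}, indep e A -> (ist \in A) || (jst \in A) ->
     ~~ (Ihat \subset A)) ->
  exists (P : {poly R}) (Ds : seq {poly R}),
    [/\ (forall f, f \in Ds -> admissible_factor e ist jst a b f),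
        0 < P.[0] &
        forall delta, 0 < delta <= dbar ->
          (\prod_(f <- Ds) f).[delta] != 0 /\
          C2 e ist jst a b delta = P.[delta] / (\prod_(f <- Ds) f).[delta]].
Proof.
move=> hsg _ hneq hne sat hyp.
have r1 := ratrep_Tstar sat hyp (@good_e n R e ist jst a b).
have r2 := ratrep_Tstar sat hyp (@good_bar n R e ist jst a b).
have r := ratrep_add r1 (ratrep_opp r2).
have [P [Ds [ad p0 z h]]] := r.
exists P, Ds; split => //.
  rewrite z; apply: mulr_gt0 => //; exact: (C2_pos ist jst sat hyp hsg hneq hne).
Qed.
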